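(* Let $S_1,S_2$ be solids of $\mathrm{PG}(6,q)$ with $\dim(S_1\cap S_2)\le 1$ and let $P$ be a point not contained in $S_1\cup S_2$. Then the number of planes that contain $P$ and meet both $S_1$ and $S_2$ non-trivially is at most $2q^6+2q^5+3q^4+2q^3+2q^2+q+1$.
   Context: Dimensions are projective (planes 2, solids 3). *)

(* Defs.v *)
From HB Require Import structures.
From mathcomp Require Import all_boot all_algebra all_field.
Set Implicit Arguments. Unset Strict Implicit. Unset Printing Implicit Defensive.

(* PG(n-1,q) is modelled by the vector space 'rV[F]_n over a finite field F
   with #|F| = q; a projective subspace of projective dimension k is a vector
   subspace (an element of {vspace 'rV[F]_n}) of vector dimension k+1.
   So PG(6,q): n = 7; points: \dim = 1; planes: \dim = 3; solids: \dim = 4. *)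

(* The type of all subspaces of F^n, with the finType structure transported
   from square matrices through the canonical injection vs2mx (this is just
   {vspace 'rV[F]_n} with a finType instance). *)
Definition pgsub (F : finFieldType) (n : nat) :=
  can_type (@VectorInternalTheory.vs2mxK F 'rV[F]_n).

Definition planes_through_meeting (F : finFieldType)
  (P S1 S2 : {vspace 'rV[F]_7}) : {set pgsub F 7} :=
  [set pi : pgsub F 7 | [&& \dim pi == 3, (P <= pi)%VS,
      (pi :&: S1)%VS != 0%VS & (pi :&: S2)%VS != 0%VS]].

(* Main.v *)
Require Import Defs.
From HB Require Import structures.
From mathcomp Require Import all_boot all_algebra all_field.
From mathcomp Require Import zify.
Set Implicit Arguments. Unset Strict Implicit. Unset Printing Implicit Defensive.
Import GRing.Theory.

Lemma card_fiber_sum (T U : finType) (A : {set T}) (B : {set U}) (f : T -> U) :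
  (forall x, x \in A -> f x \in B) ->
  #|A| = \sum_(y in B) #|[set x in A | f x == y]|.
Proof.
move=> fAB; rewrite -sum1_card (partition_big f (mem B)) //=.
apply: eq_bigr => y _; rewrite -sum1_card; apply: eq_bigl => x.
by rewrite !inE.
Qed.

Lemma card_fiber_eq (T U : finType) (A : {set T}) (B : {set U}) (f : T -> U) k :
  (forall x, x \in A -> f x \in B) ->
  (forall y, y \in B -> #|[set x in A | f x == y]| = k) -> #|A| = #|B| * k.
Proof.
move=> fAB hk; rewrite (card_fiber_sum fAB) (eq_bigr (fun _ => k)) //.
by rewrite sum_nat_const.
Qed.

Lemma card_fiber_le (T U : finType) (A : {set T}) (B : {set U}) (f : T -> U) k :
  (forall x, x \in A -> f x \in B) ->
  (forall y, y \in B -> #|[set x in A | f x == y]| <= k) -> #|A| <= #|B| * k.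
Proof.
move=> fAB hk; rewrite (card_fiber_sum fAB).
by rewrite -sum_nat_const; apply: leq_sum.
Qed.

Lemma double_count (T U : finType) (A : {set T}) (B : {set U}) (R : T -> U -> bool) :
  \sum_(x in A) #|[set y in B | R x y]| = \sum_(y in B) #|[set x in A | R x y]|.
Proof.
transitivity (\sum_(x in A) \sum_(y in B) (R x y : nat)).
  apply: eq_bigr => x _; rewrite -sum1_card.
  rewrite (eq_bigl (fun y => (y \in B) && R x y)); last by move=> y; rewrite !inE.
  rewrite big_mkcondr /=.
  by apply: eq_bigr => y _; case: (R x y).
rewrite exchange_big /=; apply: eq_bigr => y _; apply: esym.
rewrite -sum1_card (eq_bigl (fun x => (x \in A) && R x y)); last by move=> x; rewrite !inE.
rewrite big_mkcondr /=.
by apply: eq_bigr => x _; case: (R x y).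
Qed.

Section Vs.
Variable F : finFieldType.
Local Notation V := {vspace 'rV[F]_7}.
Local Notation q := #|F|.

Lemma dim1_cap0 (x U : V) : \dim x = 1 -> ~~ (x <= U)%VS -> (U :&: x = 0)%VS.
Proof.
move=> dx nxU; apply/eqP; rewrite -dimv_eq0.
have : \dim (U :&: x) <= \dim x by rewrite dimvS // capvSr.
rewrite {1}dx.
rewrite leq_eqVlt ltnS leqn0 => /orP[/eqP h|//].
have : (U :&: x == x)%VS by rewrite eqEdim capvSr h dx.
by move/eqP=> e; move: nxU; rewrite -e capvSl.
Qed.

Lemma dim_add1 (U x : V) : \dim x = 1 -> ~~ (x <= U)%VS -> \dim (U + x) = (\dim U).+1.
Proof.
move=> dx nxU; have := dimv_sum_cap U x.
by rewrite dim1_cap0 // dimv0 addn0 dx addn1.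
Qed.

Lemma card_vs (U : V) : #|[set v | v \in U]| = q ^ \dim U.
Proof. by rewrite -card_vspace; apply: eq_card => v; rewrite inE. Qed.

Definition th (k : nat) := \sum_(i < k) q ^ i.

Lemma thE k : (q - 1) * th k + 1 = q ^ k.
Proof.
have q1 : 0 < q by apply: leq_trans (finNzRing_gt1 F).
elim: k => [|k IH]; first by rewrite /th big_ord0 muln0.
rewrite /th big_ord_recr /= -/(th k) mulnDr -addnA (addnC _ 1) addnA IH.
rewrite expnS; case: q q1 => // r _; rewrite subSS subn0; lia.
Qed.

Lemma one_step (m W : V) : (m <= W)%VS ->
  #|[set U : pgsub F 7 | [&& \dim U == (\dim m).+1, (m <= U)%VS & (U <= W)%VS]]|
  = th (\dim W - \dim m).
Proof.
move=> mW.
set B := [set U : pgsub F 7 | _].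
pose A := [set v : 'rV[F]_7 | (v \in W) && (v \notin m)].
pose f := fun v : 'rV[F]_7 => ((m + <[v]>)%VS : pgsub F 7).
have dlv v : v \notin m -> \dim <[v]> = 1.
  by move=> vm; rewrite dim_vline; case: eqP vm => // ->; rewrite mem0v.
have dfv v : v \notin m -> \dim (m + <[v]>) = (\dim m).+1.
  by move=> vm; rewrite dim_add1 // ?dlv // -memvE.
have fAB : forall v, v \in A -> f v \in B.
  move=> v; rewrite !inE => /andP[vW vm].
  by rewrite dfv // eqxx addvSl subv_add mW -memvE vW.
have cardA : #|A| = q ^ \dim W - q ^ \dim m.
  have -> : A = [set v | v \in W] :\: [set v | v \in m].
    by apply/setP=> v; rewrite !inE andbC.
  rewrite cardsD card_vs.
  have -> : [set v | v \in W] :&: [set v | v \in m] = [set v | v \in m].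
    apply/setP=> v; rewrite !inE; apply/andP/idP=> [[]//|vm]; split=> //.
    exact: subvP mW _ vm.
  by rewrite card_vs.
have fib : forall U, U \in B -> #|[set x in A | f x == U]| = q ^ (\dim m).+1 - q ^ \dim m.
  move=> U; rewrite inE => /and3P[/eqP dU mU UW].
  have -> : [set x in A | f x == U] = [set v | v \in (U : V)] :\: [set v | v \in m].
    apply/setP=> v; rewrite !inE; apply/idP/idP.
      case/andP=> /andP[vW vm] /eqP e; rewrite vm /=.
      have : v \in (m + <[v]>)%VS by rewrite memvE addvSr.
      by rewrite /f in e; rewrite e.
    case/andP=> vm vU; rewrite vm (subvP UW _ vU) /=.
    rewrite /f; apply/eqP; apply/(@eqP V); rewrite eqEdim subv_add mU -memvE vU /= dfv // dU //.
  rewrite cardsD card_vs dU.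
  have -> : [set v | v \in (U : V)] :&: [set v | v \in m] = [set v | v \in m].
    apply/setP=> v; rewrite !inE; apply/andP/idP=> [[]//|vm]; split=> //.
    exact: subvP mU _ vm.
  by rewrite card_vs.
have := card_fiber_eq fAB fib; rewrite cardA.
have dmW : \dim m <= \dim W by apply: dimvS.
have q1 : 0 < q by apply: leq_trans (finNzRing_gt1 F).
have q2 : 1 < q by apply: finNzRing_gt1.
rewrite -(subnKC dmW) expnD -(thE (\dim W - \dim m)) addnC subnKC //.
move: (th _) => t; move: (\dim W - \dim m) => k; move: (\dim m) => d.
rewrite expnS => e.
have pd : 0 < q ^ d by rewrite expn_gt0 q1.
move: e pd; move: (q ^ d) => Q; move: q2; move: q => r.
case: r => // r; case: r => // r _.
rewrite !subSS !subn0 => e pQ.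
have h1 : r.+2 * Q - Q = Q * r.+1 by rewrite mulSn addKn mulnC.
have h2 : Q * (1 + r.+1 * t) - Q = Q * r.+1 * t by rewrite mulnDr muln1 addKn mulnA.
rewrite h1 h2 in e.
have e2 : #|B| * (Q * r.+1) = t * (Q * r.+1) by rewrite -e mulnC.
apply/eqP; rewrite -(eqn_pmul2r (_ : 0 < Q * r.+1)) ?e2 //.
by rewrite muln_gt0 pQ.
Qed.
End Vs.

Section G.
Variable F : finFieldType.
Local Notation V := {vspace 'rV[F]_7}.

Lemma pts (W : V) :
  #|[set a : pgsub F 7 | (\dim a == 1) && (a <= W)%VS]| = th F (\dim W).
Proof.
have := one_step (sub0v W); rewrite dimv0 subn0 => <-.
apply: eq_card => a; rewrite !inE sub0v.
by [].
Qed.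

Lemma cardsD_sub (T : finType) (A B : {set T}) : B \subset A -> #|A :\: B| = #|A| - #|B|.
Proof. by move=> BA; rewrite cardsD (setIidPr BA). Qed.

Lemma meet_one (pi S S' P J : V) :
  \dim P = 1 -> ~~ (P <= S)%VS -> ~~ (P <= S')%VS -> (P <= pi)%VS -> \dim pi = 3 ->
  (pi :&: J <= P)%VS -> ((S + P) :&: S' <= J)%VS ->
  (pi :&: S)%VS != 0%VS -> (pi :&: S')%VS != 0%VS -> \dim (pi :&: S) = 1.
Proof.
move=> dP nPS nPS' Ppi dpi piJ SPS nz nz'.
have : 0 < \dim (pi :&: S) by rewrite lt0n dimv_eq0.
rewrite leq_eqVlt => /orP[/eqP <- //|lt1].
exfalso; move/negP: nz'; apply.
have nPa : ~~ (P <= pi :&: S)%VS.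
  by apply: contra nPS => h; apply: subv_trans h (capvSr _ _).
have da := dim_add1 dP nPa.
have e : ((pi :&: S) + P == pi)%VS.
  by rewrite eqEdim subv_add capvSl Ppi da dpi.
have piT : (pi <= S + P)%VS.
  by rewrite -(eqP e); apply: addvS (capvSr _ _) (subvv _).
have h1 : (pi :&: S' <= P)%VS.
  apply: subv_trans piJ; rewrite subv_cap capvSl /=.
  apply: subv_trans SPS; exact: capvS piT (subvv _).
have h2 : (pi :&: S' <= S' :&: P)%VS by rewrite subv_cap h1 capvSr.
by rewrite -subv0 -(dim1_cap0 dP nPS'); exact: h2.
Qed.

Lemma meet_notJ (pi S P J : V) :
  \dim P = 1 -> ~~ (P <= S)%VS -> (pi :&: J <= P)%VS ->
  (pi :&: S)%VS != 0%VS -> ~~ (pi :&: S <= J)%VS.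
Proof.
move=> dP nPS piJ nz; apply/negP => aJ; move/negP: nz; apply.
have h1 : (pi :&: S <= P)%VS by apply: subv_trans piJ; rewrite subv_cap capvSl.
have h2 : (pi :&: S <= S :&: P)%VS by rewrite subv_cap h1 capvSr.
by rewrite -subv0 -(dim1_cap0 dP nPS).
Qed.

End G.
Section T. Variable F : finFieldType. Variable q : nat. Hypothesis cF : #|F| = q.
Lemma arith4 (N1 N2 N3 : nat) : 1 < q ->
  N1 * th F 2 = th F 3 * th F 2 -> N2 <= th F 3 * (th F 5 - th F 2) ->
  N3 <= (th F 4 - th F 3) * (th F 4 - th F 3) ->
  N1 + N2 + N3 <= 2 * q ^ 6 + 2 * q ^ 5 + 3 * q ^ 4 + 2 * q ^ 3 + 2 * q ^ 2 + q + 1.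
Proof.
move=> q2 e1.
have -> : N1 = th F 3. apply/eqP; rewrite -(eqn_pmul2r (_ : 0 < th F 2)) ?e1 //.
  by rewrite /th !big_ord_recr !big_ord0 /= !cF; lia.
rewrite /th !big_ord_recr !big_ord0 /= !cF => h2 h3.
rewrite !expnS !expn0 !muln1 in h2 h3 *.
nia.
Qed.
Lemma arith3 (N1 N2 N3 : nat) : 1 < q ->
  N1 * th F 2 = th F 2 * th F 1 -> N2 <= th F 2 * (th F 5 - th F 1) ->
  N3 <= (th F 4 - th F 2) * (th F 4 - th F 2) ->
  N1 + N2 + N3 <= 2 * q ^ 6 + 2 * q ^ 5 + 3 * q ^ 4 + 2 * q ^ 3 + 2 * q ^ 2 + q + 1.
Proof.
rewrite /th !big_ord_recr !big_ord0 /= !cF => q2 e1 h2 h3.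
have : N1 = 1. apply/eqP; rewrite -(eqn_pmul2r (_ : 0 < 0 + q ^ 0 + q ^ 1)) ?e1; lia.
move=> {e1} e1. subst N1.
rewrite !expnS !expn0 !muln1 in h2 h3 *.
nia.
Qed.
End T.

Unset Implicit Arguments. Set Strict Implicit.
Theorem lemma4p4 (F : finFieldType) (q : nat) (S1 S2 P : {vspace 'rV[F]_7}) :
  #|F| = q ->
  \dim S1 = 4 -> \dim S2 = 4 ->
  \dim (S1 :&: S2)%VS <= 2 ->
  \dim P = 1 -> ~~ (P <= S1)%VS -> ~~ (P <= S2)%VS ->
  #|planes_through_meeting P S1 S2| <=
    2 * q ^ 6 + 2 * q ^ 5 + 3 * q ^ 4 + 2 * q ^ 3 + 2 * q ^ 2 + q + 1.
Proof.
move=> cF d1 d2 d12 dP nP1 nP2.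
have q2 : 1 < q by rewrite -cF finNzRing_gt1.
pose T1 := (S1 + P)%VS; pose T2 := (S2 + P)%VS; pose J := (T1 :&: T2)%VS.
have dT1 : \dim T1 = 5 by rewrite /T1 dim_add1 ?d1.
have dT2 : \dim T2 = 5 by rewrite /T2 dim_add1 ?d2.
have PJ : (P <= J)%VS by rewrite subv_cap !addvSr.
have dfull : \dim (fullv : {vspace 'rV[F]_7}) = 7 by rewrite dimvf /dim /= mul1n.
have dJ34 : \dim J = 3 \/ \dim J = 4.
  have h1 := dimv_sum_cap T1 T2; have h2 := dimv_sum_cap S1 S2.
  have h3 := dimvS (subvf (T1 + T2)); rewrite dfull in h3.
  have h4 : \dim (S1 + S2) <= \dim (T1 + T2) by rewrite dimvS // addvS ?addvSl.
  rewrite dT1 dT2 -/J in h1; rewrite d1 d2 in h2; lia.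
have dSJ (S : {vspace 'rV[F]_7}) : \dim S = 4 -> ~~ (P <= S)%VS -> (J <= S + P)%VS ->
    \dim (S :&: J) = \dim J - 1.
  move=> dS nPS JT.
  have dT : \dim (S + P) = 5 by rewrite dim_add1 ?dS.
  have e : (S + J = S + P)%VS.
    apply/eqP; rewrite eqEsubv subv_add addvSl JT /=.
    by rewrite addvS // subvv.
  have := dimv_sum_cap S J; rewrite e dT dS; lia.
have dJ1 : \dim P <= \dim J by rewrite dimvS.
rewrite dP in dJ1.
have J1 : (J <= S1 + P)%VS by exact: capvSl.
have J2 : (J <= S2 + P)%VS by exact: capvSr.
set X := planes_through_meeting P S1 S2.
pose Xa1 := [set U : pgsub F 7 | [&& \dim U == 3, (P <= U)%VS & (U <= J)%VS]].
pose M := [set U : pgsub F 7 | [&& \dim U == (\dim P).+1, (P <= U)%VS & (U <= J)%VS]].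
pose Xa2 := [set pi in X | \dim ((pi : {vspace 'rV[F]_7}) :&: J) == 2].
pose Xb := [set pi in X | \dim ((pi : {vspace 'rV[F]_7}) :&: J) <= 1].
have cM : #|M| = th F (\dim J - 1) by rewrite /M one_step // dP.
have cover : #|X| <= #|Xa1| + #|Xa2| + #|Xb|.
  have sub : X \subset Xa1 :|: Xa2 :|: Xb.
    apply/subsetP => pi piX; have := piX; rewrite inE => /and4P[/eqP dpi Ppi nz1 nz2].
    rewrite !inE dpi eqxx Ppi nz1 nz2 /=.
    have : \dim ((pi : {vspace 'rV[F]_7}) :&: J) <= \dim pi by rewrite dimvS ?capvSl.
    rewrite dpi.
    have : \dim P <= \dim ((pi : {vspace 'rV[F]_7}) :&: J) by rewrite dimvS // subv_cap Ppi PJ.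
    rewrite dP.
    case: (ltngtP (\dim ((pi : {vspace 'rV[F]_7}) :&: J)) 2) => //.
    - by move=> h _ _; rewrite (_ : \dim ((pi : {vspace 'rV[F]_7}) :&: J) <= 1) ?orbT.
    - move=> h _ h3; have e : \dim ((pi : {vspace 'rV[F]_7}) :&: J) = 3 by lia.
      have e2 : ((pi : {vspace 'rV[F]_7}) :&: J == pi)%VS by rewrite eqEdim capvSl e dpi.
      by rewrite -(eqP e2) capvSr.
    - by move=> ->; rewrite ?eqxx ?orbT.
  apply: leq_trans (subset_leq_card sub) _.
  apply: leq_trans (leq_card_setU _ _) _; rewrite leq_add2r.
  exact: leq_card_setU.
have N1 : #|Xa1| * th F 2 = #|M| * th F (\dim J - 2).
  have := double_count Xa1 M (fun pi m => ((m : {vspace 'rV[F]_7}) <= pi)%VS).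
  rewrite (eq_bigr (fun _ => th F 2)); last first.
    move=> pi; rewrite inE => /and3P[/eqP dpi Ppi piJ].
    rewrite (_ : th F 2 = th F (\dim pi - \dim P)); last by rewrite dpi dP.
    rewrite -one_step //; apply: eq_card => m; rewrite !inE.
    apply/idP/idP.
      by case/andP => /and3P[-> -> _] ->.
    by case/and3P => -> -> mpi; rewrite mpi (subv_trans mpi piJ).
  rewrite [in X in _ = X -> _](eq_bigr (fun _ => th F (\dim J - 2))); last first.
    move=> m; rewrite inE => /and3P[/eqP dm Pm mJ].
    rewrite (_ : th F (\dim J - 2) = th F (\dim J - \dim m)); last by rewrite dm dP.
    rewrite -one_step //; apply: eq_card => pi; rewrite !inE dm dP.
    apply/idP/idP.
      by case/andP => /and3P[-> _ ->] ->.
    by case/and3P => -> mpi ->; rewrite mpi (subv_trans Pm mpi).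
  by rewrite !sum_nat_const.
have N2 : #|Xa2| <= #|M| * (th F 5 - th F (\dim J - 2)).
  apply: (@card_fiber_le _ _ _ _ (fun pi : pgsub F 7 => ((pi : {vspace 'rV[F]_7}) :&: J)%VS : pgsub F 7)).
    move=> pi; rewrite !inE => /andP[/and4P[_ Ppi _ _] /eqP d2'].
    by rewrite d2' dP eqxx capvSr subv_cap Ppi PJ.
  move=> m; rewrite inE => /and3P[/eqP dm Pm mJ].
  pose A5 := [set U : pgsub F 7 | [&& \dim U == (\dim m).+1, (m <= U)%VS & (U <= fullv)%VS]].
  pose AJ := [set U : pgsub F 7 | [&& \dim U == (\dim m).+1, (m <= U)%VS & (U <= J)%VS]].
  have sAJ : AJ \subset A5.
    by apply/subsetP => U; rewrite !inE subvf => /and3P[-> -> _].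
  have cA5 : #|A5| = th F 5 by rewrite /A5 one_step ?subvf // dfull dm dP.
  have cAJ : #|AJ| = th F (\dim J - 2) by rewrite /AJ one_step // dm dP.
  rewrite -cA5 -cAJ -cardsD_sub //; apply: subset_leq_card.
  apply/subsetP => pi; rewrite !inE => /andP[/andP[/and4P[/eqP dpi Ppi _ _] /eqP d2'] /eqP e].
  rewrite dm dP dpi eqxx subvf /= -e capvSl /= andbT.
  apply/negP => piJ.
  have : \dim (pi : {vspace 'rV[F]_7}) <= \dim ((pi : {vspace 'rV[F]_7}) :&: J).
    by rewrite dimvS // subv_cap subvv piJ.
  by rewrite dpi d2'.
pose Pt (S : {vspace 'rV[F]_7}) :=
  [set a : pgsub F 7 | [&& \dim a == 1, (a <= S)%VS & ~~ (a <= J)%VS]].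
have cPt (S : {vspace 'rV[F]_7}) : \dim S = 4 -> ~~ (P <= S)%VS -> (J <= S + P)%VS ->
    #|Pt S| = th F 4 - th F (\dim J - 1).
  move=> dS nPS JT.
  have -> : Pt S = [set a : pgsub F 7 | (\dim a == 1) && (a <= S)%VS] :\:
                   [set a : pgsub F 7 | (\dim a == 1) && (a <= S :&: J)%VS].
    apply/setP => a; rewrite !inE subv_cap.
    by case: (\dim a == 1); case: (a <= S)%VS; case: (a <= J)%VS.
  rewrite cardsD_sub ?pts ?dSJ ?dS //.
  by apply/subsetP => a; rewrite !inE subv_cap => /andP[-> /andP[-> _]].
have SPS12 : ((S1 + P) :&: S2 <= J)%VS.
  by rewrite subv_cap capvSl /= (subv_trans (capvSr _ _)) ?addvSl.
have SPS21 : ((S2 + P) :&: S1 <= J)%VS.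
  by rewrite subv_cap capvSl andbT (subv_trans (capvSr _ _)) ?addvSl.
have XbJ : forall pi, pi \in Xb -> ((pi : {vspace 'rV[F]_7}) :&: J <= P)%VS.
  move=> pi; rewrite !inE => /andP[/and4P[_ Ppi _ _] d1'].
  have e : (P == (pi : {vspace 'rV[F]_7}) :&: J)%VS.
    by rewrite eqEdim subv_cap Ppi PJ dP.
  by rewrite -(eqP e).
have N3 : #|Xb| <= #|Pt S1| * #|Pt S2|.
  pose g := fun pi : pgsub F 7 =>
    (((pi : {vspace 'rV[F]_7}) :&: S1)%VS : pgsub F 7, ((pi : {vspace 'rV[F]_7}) :&: S2)%VS : pgsub F 7).
  have rep : forall pi, pi \in Xb ->
      (pi : {vspace 'rV[F]_7}) = ((P + (pi :&: S1)) + (pi :&: S2))%VS.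
    move=> pi piXb; have piJ := XbJ pi piXb; move: piXb.
    rewrite !inE => /andP[/and4P[/eqP dpi Ppi nz1 nz2] _].
    have da := meet_one dP nP1 nP2 Ppi dpi piJ SPS12 nz1 nz2.
    have db := meet_one dP nP2 nP1 Ppi dpi piJ SPS21 nz2 nz1.
    have naJ := meet_notJ dP nP1 piJ nz1.
    have nbJ := meet_notJ dP nP2 piJ nz2.
    have naP : ~~ ((pi : {vspace 'rV[F]_7}) :&: S1 <= P)%VS.
      by apply: contra naJ => h; apply: subv_trans h PJ.
    have dPa := dim_add1 da naP.
    have nb : ~~ ((pi : {vspace 'rV[F]_7}) :&: S2 <= P + (pi :&: S1))%VS.
      apply: contra nbJ => h; rewrite subv_cap (subv_trans h) /=.
        by rewrite (subv_trans (capvSr _ _)) ?addvSl.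
      by rewrite subv_add addvSr (subv_trans (capvSr _ _)) ?addvSl.
    have dPab := dim_add1 db nb.
    apply/esym/eqP; rewrite eqEdim dPab dPa dP dpi leqnn andbT.
    by rewrite !subv_add Ppi !capvSl.
  have inj : {in Xb &, injective g}.
    move=> pi pi' h h' e.
    have e1 : ((pi : {vspace 'rV[F]_7}) :&: S1)%VS = ((pi' : {vspace 'rV[F]_7}) :&: S1)%VS := congr1 fst e.
    have e2 : ((pi : {vspace 'rV[F]_7}) :&: S2)%VS = ((pi' : {vspace 'rV[F]_7}) :&: S2)%VS := congr1 snd e.
    rewrite (rep pi h) (rep pi' h').
    by rewrite e1 e2.
  rewrite -cardsX -(card_in_imset inj); apply: subset_leq_card.
  apply/subsetP => x /imsetP[pi piXb ->].
  have piJ := XbJ pi piXb; move: piXb.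
  rewrite !inE => /andP[/and4P[/eqP dpi Ppi nz1 nz2] _].
  rewrite (meet_one dP nP1 nP2 Ppi dpi piJ SPS12 nz1 nz2).
  rewrite (meet_one dP nP2 nP1 Ppi dpi piJ SPS21 nz2 nz1) !capvSr !eqxx /=.
  by rewrite (meet_notJ dP nP1 piJ nz1) (meet_notJ dP nP2 piJ nz2).
rewrite (cPt S1 d1 nP1 J1) (cPt S2 d2 nP2 J2) in N3.
rewrite cM in N1 N2.
apply: leq_trans cover _.
case: dJ34 => e; rewrite e in N1 N2 N3.
  by apply: (arith3 cF q2 _ N2 N3); rewrite N1 mulnC.
by apply: (arith4 cF q2 N1 N2 N3).
Qed.
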